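(* Let $A\in\mathbb{R}^{m\times n}$ have full column rank $n$, $b\in\mathbb{R}^m$, $L\in\mathbb{R}^{n\times k}$ with $k\le n$, and let $g(A,b)=L^T(A^TA)^{-1}A^Tb$, which is Fréchet differentiable in a neighbourhood of $(A,b)$ with derivative $g'(A,b)$. Fix a matrix norm $\|\cdot\|_\ast$, which is either the Frobenius norm or the spectral norm. For $\alpha,\beta>0$ define $$\kappa_{g}(A,b;\alpha,\beta)=\max_{(\Delta A,\Delta b)\neq 0}\frac{\|g'(A,b).(\Delta A,\Delta b)\|_2}{\sqrt{\alpha^2\|\Delta A\|_\ast^2+\beta^2\|\Delta b\|_2^2}},$$ and define $\kappa_{g}(b)=\max_{\Delta b\neq0}\frac{\|\frac{\partial g}{\partial b}(A,b).\Delta b\|_2}{\|\Delta b\|_2}$ and $\kappa_{g}(A)=\max_{\Delta A\neq0}\frac{\|\frac{\partial g}{\partial A}(A,b).\Delta A\|_2}{\|\Delta A\|_\ast}$. Then for every fixed $\beta>0$, $$\lim_{\alpha\to+\infty}\kappa_g(A,b;\alpha,\beta)=\frac{1}{\beta}\kappa_g(b),$$ and for every fixed $\alpha>0$, $$\lim_{\beta\to+\infty}\kappa_g(A,b;\alpha,\beta)=\frac{1}{\alpha}\kappa_g(A).$$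
   Context: $\|\cdot\|_2$ is the Euclidean norm on vectors. $\frac{\partial g}{\partial A}(A,b)$ and $\frac{\partial g}{\partial b}(A,b)$ are the partial Fréchet derivatives of $g$, so that $g'(A,b).(\Delta A,\Delta b)=\frac{\partial g}{\partial A}(A,b).\Delta A+\frac{\partial g}{\partial b}(A,b).\Delta b$. *)

(* Defs.v *)
From HB Require Import structures.
From mathcomp Require Import all_boot all_order all_algebra.
From mathcomp Require Import all_classical all_reals all_analysis.
Set Implicit Arguments. Unset Strict Implicit. Unset Printing Implicit Defensive.
Import Order.TTheory GRing.Theory Num.Theory.
Import numFieldNormedType.Exports.
Local Open Scope classical_set_scope.
Local Open Scope ring_scope.

Definition vnorm2 {R : realType} {p : nat} (v : 'cV[R]_p) : R :=
  Num.sqrt (\sum_(i < p) v i 0 ^+ 2).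

Definition frobnorm {R : realType} {m n : nat} (M : 'M[R]_(m, n)) : R :=
  Num.sqrt (\sum_(i < m) \sum_(j < n) M i j ^+ 2).

Definition specnorm {R : realType} {m n : nat} (M : 'M[R]_(m, n)) : R :=
  sup [set r | exists x : 'cV[R]_n, x != 0 /\ r = vnorm2 (M *m x) / vnorm2 x].

Inductive mxnorm_kind := Frobenius | Spectral.

Definition mxnorm {R : realType} {m n : nat} (kind : mxnorm_kind)
  (M : 'M[R]_(m, n)) : R :=
  match kind with Frobenius => frobnorm M | Spectral => specnorm M end.

Definition gfun {R : realType} {m n k : nat} (L : 'M[R]_(n, k))
  (Ab : 'M[R]_(m, n) * 'cV[R]_m) : 'cV[R]_k :=
  L^T *m invmx (Ab.1^T *m Ab.1) *m Ab.1^T *m Ab.2.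

Definition kappa_ab {R : realType} {m n k : nat} (kind : mxnorm_kind)
  (L : 'M[R]_(n, k)) (A : 'M[R]_(m, n)) (b : 'cV[R]_m) (alpha beta : R) : R :=
  sup [set r | exists (dA : 'M[R]_(m, n)) (db : 'cV[R]_m),
         (dA, db) != 0 /\
         r = vnorm2 ('d (gfun L) (A, b) (dA, db))
             / Num.sqrt (alpha ^+ 2 * mxnorm kind dA ^+ 2 + beta ^+ 2 * vnorm2 db ^+ 2)].

(* partial derivative wrt b: dg/db . db = g'(A,b).(0, db) *)
Definition kappa_b {R : realType} {m n k : nat}
  (L : 'M[R]_(n, k)) (A : 'M[R]_(m, n)) (b : 'cV[R]_m) : R :=
  sup [set r | exists db : 'cV[R]_m, db != 0 /\
         r = vnorm2 ('d (gfun L) (A, b) (0, db)) / vnorm2 db].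

(* partial derivative wrt A: dg/dA . dA = g'(A,b).(dA, 0) *)
Definition kappa_A {R : realType} {m n k : nat} (kind : mxnorm_kind)
  (L : 'M[R]_(n, k)) (A : 'M[R]_(m, n)) (b : 'cV[R]_m) : R :=
  sup [set r | exists dA : 'M[R]_(m, n), dA != 0 /\
         r = vnorm2 ('d (gfun L) (A, b) (dA, 0)) / mxnorm kind dA].

(* Main.v *)
Set Warnings "-all".
Require Import Defs.
From HB Require Import structures.
From HB Require Import structures.
From mathcomp Require Import all_boot all_order all_algebra.
From mathcomp Require Import all_classical all_reals all_analysis.
From mathcomp Require Import ring lra.
Import Order.TTheory GRing.Theory Num.Theory.
Import numFieldNormedType.Exports.
Local Open Scope classical_set_scope.
Local Open Scope ring_scope.

Section H.
Variable R : realType.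

Lemma lim_sq (f : R -> R) (l c : R) : 0 <= c ->
  (forall x, 0 < x -> l <= f x <= l + c / x) -> f @ +oo --> l.
Proof.
move=> c0 H; apply/cvgrPdist_le => e e0.
exists (c / e); split; first by apply: ger0_real; rewrite divr_ge0 // ltW.
move=> x hx; have x0 : 0 < x by rewrite (le_lt_trans _ hx) // divr_ge0 // ltW.
have /andP[h1 h2] := H x x0.
rewrite distrC ger0_norm ?subr_ge0 // lerBlDl (le_trans h2) // lerD2l.
by rewrite ler_pdivrMr // mulrC -ler_pdivrMr // ltW.
Qed.

Lemma sup_le (E : set R) c : (forall x, E x -> x <= c) -> 0 <= c -> sup E <= c.
Proof.
move=> H c0; case: (eqVneq E set0) => [->|/set0P ne]; first by rewrite sup0.
by apply: ge_sup.
Qed.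

Lemma sup_ge (E : set R) c x : (forall y, E y -> y <= c) -> E x -> x <= sup E.
Proof. by move=> H Ex; apply: ub_le_sup => //; exists c. Qed.

Lemma sup_ge0 (E : set R) c : (forall y, E y -> y <= c) ->
  (forall y, E y -> 0 <= y) -> 0 <= sup E.
Proof.
move=> H H0; case: (eqVneq E set0) => [->|/set0P [x Ex]]; first by rewrite sup0.
exact: (le_trans (H0 _ Ex) (@sup_ge E c x H Ex)).
Qed.


Arguments sup_ge0 {E c}. Arguments sup_ge {E c x}. Arguments sup_le {E c}.

Lemma sq_norm (x : R) : `|x| ^+ 2 = x ^+ 2.
Proof. by rewrite real_normK // num_real. Qed.

Section V.
Variable p : nat.
Implicit Types u v : 'cV[R]_p.

Lemma vnorm2_ge0 v : 0 <= vnorm2 v.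
Proof. exact: sqrtr_ge0. Qed.

Lemma vnorm2_sq v : vnorm2 v ^+ 2 = \sum_(i < p) v i 0 ^+ 2.
Proof. by rewrite sqr_sqrtr // sumr_ge0 // => i _; exact: sqr_ge0. Qed.

Lemma vnorm2_0 : vnorm2 (0 : 'cV[R]_p) = 0.
Proof.
rewrite /vnorm2 big1 ?sqrtr0 // => i _; by rewrite mxE expr0n.
Qed.

Lemma coord_le v i : `|v i 0| <= vnorm2 v.
Proof.
rewrite -sqrtr_sqr; apply: ler_wsqrtr.
rewrite (bigD1 i) //= lerDl sumr_ge0 // => j _; exact: sqr_ge0.
Qed.

Lemma vnorm2_gt0 v : v != 0 -> 0 < vnorm2 v.
Proof.
move=> v0; have [i vi] : exists i, v i 0 != 0.
  apply/existsP; apply: contraNT v0; rewrite negb_exists => /forallP H.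
  apply/eqP/matrixP => i j; rewrite (ord1 j) mxE; apply/eqP.
  by have := H i; rewrite negbK.
by apply: lt_le_trans (coord_le v i); rewrite normr_gt0.
Qed.

Lemma vnorm2_le_sum v : vnorm2 v <= \sum_(i < p) `|v i 0|.
Proof.
have [H1 H2] : \sum_(i < p) v i 0 ^+ 2 <= (\sum_(i < p) `|v i 0|) ^+ 2 /\
               0 <= \sum_(i < p) `|v i 0|.
  elim/big_rec2: _ => [|i y1 y2 _ [h1 h2]]; first by rewrite expr0n.
  have := normr_ge0 (v i 0); rewrite -(sq_norm (v i 0)).
  move: (`|v i 0|) => a a0; split; nra.
by rewrite -(ger0_norm H2) -sqrtr_sqr; apply: ler_wsqrtr.
Qed.

Lemma dot_le u v : \sum_(i < p) u i 0 * v i 0 <= vnorm2 u * vnorm2 v.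
Proof.
have [a0|a0] := eqVneq (vnorm2 u) 0.
  rewrite a0 mul0r big1 // => i _.
  have := coord_le u i; rewrite a0 => h.
  have : `|u i 0| = 0 by apply/eqP; rewrite eq_le h normr_ge0.
  by move/eqP; rewrite normr_eq0 => /eqP ->; rewrite mul0r.
have [b0|b0] := eqVneq (vnorm2 v) 0.
  rewrite b0 mulr0 big1 // => i _.
  have := coord_le v i; rewrite b0 => h.
  have : `|v i 0| = 0 by apply/eqP; rewrite eq_le h normr_ge0.
  by move/eqP; rewrite normr_eq0 => /eqP ->; rewrite mulr0.
have ha : 0 < vnorm2 u by rewrite lt_neqAle eq_sym a0 vnorm2_ge0.
have hb : 0 < vnorm2 v by rewrite lt_neqAle eq_sym b0 vnorm2_ge0.
set a := vnorm2 u in ha a0 *; set b := vnorm2 v in hb b0 *.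
have hab : 0 < 2 * a * b by rewrite !mulr_gt0.
rewrite -(ler_pM2l hab) mulr_sumr.
apply: (le_trans (y := \sum_(i < p) (b ^+ 2 * u i 0 ^+ 2 + a ^+ 2 * v i 0 ^+ 2))).
  by apply: ler_sum => i _; have := sqr_ge0 (b * u i 0 - a * v i 0); nra.
rewrite big_split /= -!mulr_sumr -!vnorm2_sq -/a -/b.
by nra.
Qed.

Lemma vnorm2D u v : vnorm2 (u + v) <= vnorm2 u + vnorm2 v.
Proof.
rewrite -(ger0_norm (addr_ge0 (vnorm2_ge0 u) (vnorm2_ge0 v))) -sqrtr_sqr.
apply: ler_wsqrtr.
have -> : \sum_(i < p) (u + v) i 0 ^+ 2 =
  \sum_(i < p) u i 0 ^+ 2 + \sum_(i < p) v i 0 ^+ 2 + 2 * \sum_(i < p) u i 0 * v i 0.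
  rewrite mulr_sumr -!big_split /=; apply: eq_bigr => i _; rewrite mxE; ring.
rewrite -!vnorm2_sq; have := dot_le u v; nra.
Qed.

End V.
Arguments vnorm2_ge0 {p}. Arguments vnorm2_sq {p}. Arguments vnorm2_0 {p}. Arguments coord_le {p}. Arguments vnorm2_gt0 {p v}. Arguments vnorm2_le_sum {p}. Arguments dot_le {p}. Arguments vnorm2D {p}.

Section M.
Variables m n : nat.
Implicit Types M : 'M[R]_(m, n).

Lemma frob_ge0 M : 0 <= frobnorm M.
Proof. exact: sqrtr_ge0. Qed.

Lemma frob_entry M i j : `|M i j| <= frobnorm M.
Proof.
rewrite -sqrtr_sqr; apply: ler_wsqrtr.
rewrite (bigD1 i) //= (bigD1 j) //= -addrA lerDl addr_ge0 // sumr_ge0 // => *;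
  rewrite ?sumr_ge0 // => *; exact: sqr_ge0.
Qed.

Lemma frob0 : frobnorm (0 : 'M[R]_(m, n)) = 0.
Proof.
rewrite /frobnorm big1 ?sqrtr0 // => i _; rewrite big1 // => j _.
by rewrite mxE expr0n.
Qed.

Lemma mulmx_bound M (x : 'cV[R]_n) :
  vnorm2 (M *m x) <= (\sum_(i < m) \sum_(j < n) `|M i j|) * vnorm2 x.
Proof.
apply: le_trans; first exact: vnorm2_le_sum.
rewrite mulr_suml; apply: ler_sum => i _.
rewrite mxE mulr_suml; apply: (le_trans (ler_norm_sum _ _ _)).
apply: ler_sum => j _; rewrite normrM ler_wpM2l //; exact: coord_le.
Qed.

Definition CM M := \sum_(i < m) \sum_(j < n) `|M i j|.

Lemma spec_set_ub M y :
  [set r | exists x : 'cV[R]_n, x != 0 /\ r = vnorm2 (M *m x) / vnorm2 x] y ->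
  y <= CM M.
Proof.
move=> [x [x0 ->]]; have hx := vnorm2_gt0 x0.
by rewrite ler_pdivrMr // mulmx_bound.
Qed.

Lemma spec_set_ge0 M y :
  [set r | exists x : 'cV[R]_n, x != 0 /\ r = vnorm2 (M *m x) / vnorm2 x] y ->
  0 <= y.
Proof. by move=> [x [x0 ->]]; rewrite divr_ge0 // vnorm2_ge0. Qed.

Lemma spec_ge0 M : 0 <= specnorm M.
Proof. exact: (sup_ge0 (@spec_set_ub M) (@spec_set_ge0 M)). Qed.

Lemma vnorm2_delta (j : 'I_n) : vnorm2 (delta_mx j 0 : 'cV[R]_n) = 1.
Proof.
rewrite /vnorm2 (bigD1 j) //= big1 ?addr0.
  by rewrite mxE !eqxx /= expr1n sqrtr1.
by move=> l lj; rewrite mxE (negbTE lj) /= expr0n.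
Qed.

Lemma spec_entry M i j : `|M i j| <= specnorm M.
Proof.
apply: (le_trans _ (sup_ge (@spec_set_ub M) _)); last first.
  exists (delta_mx j 0); split; last by reflexivity.
  apply/eqP => /matrixP /(_ j 0); rewrite !mxE !eqxx /= => /eqP.
  by rewrite oner_eq0.
rewrite vnorm2_delta divr1 -colE.
by have := coord_le (col j M) i; rewrite mxE.
Qed.

Lemma spec0 : specnorm (0 : 'M[R]_(m, n)) = 0.
Proof.
apply/eqP; rewrite eq_le spec_ge0 andbT; apply: sup_le => // y [x [x0 ->]].
by rewrite mul0mx vnorm2_0 mul0r.
Qed.

Lemma mxn_ge0 kind M : 0 <= mxnorm kind M.
Proof. case: kind; [exact: frob_ge0|exact: spec_ge0]. Qed.

Lemma mxn_entry kind M i j : `|M i j| <= mxnorm kind M.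
Proof. case: kind; [exact: frob_entry|exact: spec_entry]. Qed.

Lemma mxn0 kind : mxnorm kind (0 : 'M[R]_(m, n)) = 0.
Proof. case: kind; [exact: frob0|exact: spec0]. Qed.

Lemma mxn_gt0 kind M : M != 0 -> 0 < mxnorm kind M.
Proof.
move=> M0; have [i [j Mij]] : exists i j, M i j != 0.
  apply: contrapT => H; move/eqP: M0; apply; apply/matrixP => i j; rewrite mxE.
  by apply/eqP/negPn/negP => Mij; apply: H; exists i, j.
by apply: lt_le_trans (mxn_entry kind M i j); rewrite normr_gt0.
Qed.

End M.
Arguments mxn_gt0 {m n} kind {M}. Arguments mxn_ge0 {m n}. Arguments mxn_entry {m n}. Arguments mxn0 {m n}.

Section Main.
Variables (m n k : nat) (L : 'M[R]_(n, k)) (A : 'M[R]_(m, n)) (b : 'cV[R]_m).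
Variable kind : mxnorm_kind.
Hypothesis Hd : differentiable (gfun L) (A, b).
Local Notation D := ('d (gfun L) (A, b)).

Lemma Dsplit dA db : D (dA, db) = D (dA, 0) + D (0, db).
Proof.
rewrite -linearD /=; congr (D _).
have -> : (dA, 0) + (0, db) = (dA + 0, 0 + db) :> _ * _ by []. 
by rewrite addr0 add0r.
Qed.

Lemma D00 : D (0, 0) = 0.
Proof. exact: linear0. Qed.

Lemma mxnorm_entry_le p q (M : 'M[R]_(p, q)) i j : `|M i j| <= `|M|.
Proof.
have -> : `|M| = mx_norm M by [].
by rewrite mx_normrE (bigD1 (i, j)) //= le_max lexx.
Qed.

Lemma mxnorm_le p q (M : 'M[R]_(p, q)) c : 0 <= c -> (forall i j, `|M i j| <= c) -> `|M| <= c.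
Proof.
move=> c0 H; have -> : `|M| = mx_norm M by [].
rewrite mx_normrE; elim/big_ind: _ => //.
  by move=> x y hx hy; rewrite ge_max hx hy.
Qed.

Lemma Dbound : exists C, 0 <= C /\ forall x, vnorm2 (D x) <= C * `|x|.
Proof.
have hc : {for 0, continuous D} by exact: (diff_continuous Hd).
have /linear_boundedP/pinfty_ex_gt0 [r r0 Hr] := continuous_linear_bounded 0 hc.
exists (k%:R * r); split; first by rewrite mulr_ge0 // ltW.
move=> x; apply: le_trans; first exact: vnorm2_le_sum.
apply: (le_trans (y := \sum_(i < k) `|D x|)).
  by apply: ler_sum => i _; exact: mxnorm_entry_le.
rewrite sumr_const card_ord -mulrA -[`|D x| *+ k]mulr_natl; apply: ler_wpM2l => //; exact: Hr.
Qed.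


Lemma normA_le (dA : 'M[R]_(m, n)) : `|(dA, 0 : 'cV[R]_m)| <= mxnorm kind dA.
Proof.
rewrite prod_normE ge_max /= normr0 mxn_ge0 andbT.
apply: mxnorm_le; first exact: mxn_ge0.
move=> i j; exact: mxn_entry.
Qed.

Lemma normb_le (db : 'cV[R]_m) : `|(0 : 'M[R]_(m, n), db)| <= vnorm2 db.
Proof.
rewrite prod_normE ge_max /= normr0 vnorm2_ge0 /=.
apply: mxnorm_le; first exact: vnorm2_ge0.
move=> i j; rewrite (ord1 j); exact: coord_le.
Qed.

Definition SA := [set r | exists dA : 'M[R]_(m, n), dA != 0 /\
         r = vnorm2 ('d (gfun L) (A, b) (dA, 0)) / mxnorm kind dA].
Definition SB := [set r | exists db : 'cV[R]_m, db != 0 /\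
         r = vnorm2 ('d (gfun L) (A, b) (0, db)) / vnorm2 db].

Lemma SA_ub : exists C, forall y, SA y -> y <= C.
Proof.
have [C [C0 HC]] := Dbound; exists C => y [dA [dA0 ->]].
have hN := mxn_gt0 kind dA0.
rewrite ler_pdivrMr //; apply: (le_trans (HC _)); apply: ler_wpM2l => //.
exact: normA_le.
Qed.

Lemma SB_ub : exists C, forall y, SB y -> y <= C.
Proof.
have [C [C0 HC]] := Dbound; exists C => y [db [db0 ->]].
have hN := vnorm2_gt0 db0.
rewrite ler_pdivrMr //; apply: (le_trans (HC _)); apply: ler_wpM2l => //.
exact: normb_le.
Qed.

Lemma SA_ge0 y : SA y -> 0 <= y.
Proof. by move=> [dA [_ ->]]; rewrite divr_ge0 ?vnorm2_ge0 ?mxn_ge0. Qed.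

Lemma SB_ge0 y : SB y -> 0 <= y.
Proof. by move=> [db [_ ->]]; rewrite divr_ge0 ?vnorm2_ge0. Qed.

Lemma KA_ge0 : 0 <= kappa_A kind L A b.
Proof. have [C HC] := SA_ub; exact: (sup_ge0 HC SA_ge0). Qed.

Lemma KB_ge0 : 0 <= kappa_b L A b.
Proof. have [C HC] := SB_ub; exact: (sup_ge0 HC SB_ge0). Qed.

Lemma KA_ub dA : vnorm2 (D (dA, 0)) <= kappa_A kind L A b * mxnorm kind dA.
Proof.
have [->|dA0] := eqVneq dA 0.
  by rewrite D00 vnorm2_0 mxn0 mulr0.
have hN := mxn_gt0 kind dA0; have [C HC] := SA_ub.
rewrite -ler_pdivrMr //; apply: (sup_ge HC); by exists dA.
Qed.

Lemma KB_ub db : vnorm2 (D (0, db)) <= kappa_b L A b * vnorm2 db.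
Proof.
have [->|db0] := eqVneq db 0.
  by rewrite D00 !vnorm2_0 mulr0.
have hN := vnorm2_gt0 db0; have [C HC] := SB_ub.
rewrite -ler_pdivrMr //; apply: (sup_ge HC); by exists db.
Qed.


Definition SK al be := [set r | exists (dA : 'M[R]_(m, n)) (db : 'cV[R]_m),
         (dA, db) != 0 /\
         r = vnorm2 ('d (gfun L) (A, b) (dA, db))
             / Num.sqrt (al ^+ 2 * mxnorm kind dA ^+ 2 + be ^+ 2 * vnorm2 db ^+ 2)].

Lemma Keq al be : kappa_ab kind L A b al be = sup (SK al be).
Proof. by []. Qed.

Lemma SK_elem_le al be : 0 < al -> 0 < be -> forall y, SK al be y ->
  y <= kappa_A kind L A b / al + kappa_b L A b / be.
Proof.
move=> a0 b0 y [dA [db [_ ->]]].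
set S := Num.sqrt _.
have hv : vnorm2 (D (dA, db)) <=
    kappa_A kind L A b * mxnorm kind dA + kappa_b L A b * vnorm2 db.
  rewrite Dsplit; apply: le_trans; first exact: vnorm2D.
  by apply: lerD; [exact: KA_ub|exact: KB_ub].
have hS1 : al * mxnorm kind dA <= S.
  have -> : al * mxnorm kind dA = Num.sqrt ((al * mxnorm kind dA) ^+ 2).
    by rewrite sqrtr_sqr ger0_norm //; apply: mulr_ge0; [exact: ltW | exact: mxn_ge0].
  by apply: ler_wsqrtr; rewrite exprMn lerDl mulr_ge0 ?sqr_ge0.
have hS2 : be * vnorm2 db <= S.
  have -> : be * vnorm2 db = Num.sqrt ((be * vnorm2 db) ^+ 2).
    by rewrite sqrtr_sqr ger0_norm //; apply: mulr_ge0; [exact: ltW | exact: vnorm2_ge0].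
  by apply: ler_wsqrtr; rewrite exprMn lerDr mulr_ge0 ?sqr_ge0.
have [S0|S0] := eqVneq S 0.
  by rewrite S0 invr0 mulr0 addr_ge0 // divr_ge0 ?KA_ge0 ?KB_ge0 ?ltW.
have Spos : 0 < S by rewrite lt_neqAle eq_sym S0 sqrtr_ge0.
rewrite ler_pdivrMr //; apply: (le_trans hv); rewrite mulrDl; apply: lerD.
  rewrite -mulrA; apply: ler_wpM2l; first exact: KA_ge0.
  by rewrite mulrC ler_pdivlMr // mulrC.
rewrite -mulrA; apply: ler_wpM2l; first exact: KB_ge0.
by rewrite mulrC ler_pdivlMr // mulrC.
Qed.

Arguments SK_elem_le {al be}.

Lemma SK_ge0 al be y : SK al be y -> 0 <= y.
Proof. by move=> [dA [db [_ ->]]]; rewrite divr_ge0 ?vnorm2_ge0 ?sqrtr_ge0. Qed.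

Lemma K_le al be : 0 < al -> 0 < be ->
  kappa_ab kind L A b al be <= kappa_A kind L A b / al + kappa_b L A b / be.
Proof.
move=> a0 b0; rewrite Keq; apply: (sup_le (SK_elem_le a0 b0)).
by rewrite addr_ge0 // divr_ge0 ?KA_ge0 ?KB_ge0 ?ltW.
Qed.

Lemma K_ge0 al be : 0 < al -> 0 < be -> 0 <= kappa_ab kind L A b al be.
Proof. by move=> a0 b0; rewrite Keq; exact: (sup_ge0 (SK_elem_le a0 b0) (@SK_ge0 al be)). Qed.

Lemma K_geB al be : 0 < al -> 0 < be ->
  kappa_b L A b / be <= kappa_ab kind L A b al be.
Proof.
move=> a0 b0; rewrite ler_pdivrMr //; apply: sup_le; last first.
  by apply: mulr_ge0; [exact: K_ge0 | exact: ltW].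
move=> y [db [db0 ->]]; rewrite -ler_pdivrMr //.
have -> : vnorm2 (D (0, db)) / vnorm2 db / be = vnorm2 (D (0, db)) / (vnorm2 db * be).
  by rewrite invfM mulrA.
rewrite Keq; apply: (sup_ge (SK_elem_le a0 b0)); exists 0, db; split.
  by apply: contra db0 => /eqP [] ->.
congr (_ / _); rewrite mxn0 expr0n /= mulr0 add0r -exprMn [be * _]mulrC.
by rewrite sqrtr_sqr ger0_norm // mulr_ge0 ?vnorm2_ge0 ?ltW.
Qed.

Lemma K_geA al be : 0 < al -> 0 < be ->
  kappa_A kind L A b / al <= kappa_ab kind L A b al be.
Proof.
move=> a0 b0; rewrite ler_pdivrMr //; apply: sup_le; last first.
  by apply: mulr_ge0; [exact: K_ge0 | exact: ltW].
move=> y [dA [dA0 ->]]; rewrite -ler_pdivrMr //.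
have -> : vnorm2 (D (dA, 0)) / mxnorm kind dA / al =
          vnorm2 (D (dA, 0)) / (mxnorm kind dA * al).
  by rewrite invfM mulrA.
rewrite Keq; apply: (sup_ge (SK_elem_le a0 b0)); exists dA, 0; split.
  by apply: contra dA0 => /eqP [] ->.
congr (_ / _); rewrite vnorm2_0 expr0n /= mulr0 addr0 -exprMn [al * _]mulrC.
by rewrite sqrtr_sqr ger0_norm // mulr_ge0 ?mxn_ge0 ?ltW.
Qed.

Lemma main_sec :
  (forall beta : R, 0 < beta ->
     (fun alpha => kappa_ab kind L A b alpha beta) @ +oo%R
       --> kappa_b L A b / beta) /\
  (forall alpha : R, 0 < alpha ->
     (fun beta => kappa_ab kind L A b alpha beta) @ +oo%R
       --> kappa_A kind L A b / alpha).
Proof.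
split=> [be b0|al a0].
  apply: (@lim_sq _ _ (kappa_A kind L A b) KA_ge0) => al a0; rewrite K_geB //= addrC; exact: K_le.
apply: (@lim_sq _ _ (kappa_b L A b) KB_ge0) => be b0; rewrite K_geA //=; exact: K_le.
Qed.

End Main.
End H.

Theorem mainTheorem3 (R : realType) (m n k : nat) (A : 'M[R]_(m, n))
  (b : 'cV[R]_m) (L : 'M[R]_(n, k)) (kind : mxnorm_kind) :
  \rank A = n -> (k <= n)%N ->
  differentiable (gfun L) (A, b) ->
  (forall beta : R, 0 < beta ->
     (fun alpha => kappa_ab kind L A b alpha beta) @ +oo%R
       --> kappa_b L A b / beta) /\
  (forall alpha : R, 0 < alpha ->
     (fun beta => kappa_ab kind L A b alpha beta) @ +oo%R
       --> kappa_A kind L A b / alpha).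
Proof. by move=> _ _ Hd; exact: (@main_sec R m n k L A b kind Hd). Qed.
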